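(* Let $k$ be a commutative ring, $M$ a commutative $k$-algebra and $H$ a cocommutative $k$-coalgebra with coproduct $\Delta$ and counit $\eta$. Then there is a universal commutative $k$-algebra $H(M)$ equipped with a linear map $H\otimes M\to H(M)$, $h\otimes m\mapsto h(m)$, satisfying $$h(mn)=\sum h'(m)h''(n),\qquad h(1)=\eta(h)$$ (universal meaning: for any commutative $k$-algebra $B$ with a linear map $H\otimes M\to B$ satisfying these identities there is a unique algebra homomorphism $H(M)\to B$ compatible with the maps from $H\otimes M$). If $H$ is a bialgebra, then $H$ acts on the commutative ring $H(M)$ (with $h_1(h_2(m))=(h_1h_2)(m)$). If $M$ is a commutative and cocommutative bialgebra (respectively Hopf algebra), then so is $H(M)$.
   Context: Sweedler notation $\Delta(h)=\sum h'\otimes h''$. *)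

(* Defs.v *)
(* Tensor products are not in the library: elements of U (x) V
   are represented by finite lists of pure tensors (scalars absorbed into the
   first factor), and equality in U (x) V is the equality of their images
   under every bilinear map (the universal property of the tensor product). *)
From HB Require Import structures.
From mathcomp Require Import all_boot all_order all_algebra.
Set Implicit Arguments. Unset Strict Implicit. Unset Printing Implicit Defensive.
Import Order.TTheory GRing.Theory Num.Theory.
Local Open Scope ring_scope.

Section Defs.
Variable k : comPzRingType.

Definition linmap (U V : lmodType k) (f : U -> V) : Prop :=
  forall (a : k) (u u' : U), f (a *: u + u') = a *: f u + f u'.

Definition linform (U : lmodType k) (f : U -> k) : Prop :=
  forall (a : k) (u u' : U), f (a *: u + u') = a * f u + f u'.

Definition bilin (U V W : lmodType k) (b : U -> V -> W) : Prop :=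
  (forall v, linmap (fun u => b u v)) /\ (forall u, linmap (b u)).

Definition trilin (U V X W : lmodType k) (t : U -> V -> X -> W) : Prop :=
  (forall v x, linmap (fun u => t u v x)) /\
  (forall u x, linmap (fun v => t u v x)) /\
  (forall u v, linmap (t u v)).

Definition tens2 (U V : lmodType k) := seq (U * V).
Definition tens3 (U V X : lmodType k) := seq (U * V * X).

Definition teq2 (U V : lmodType k) (x y : tens2 U V) : Prop :=
  forall (W : lmodType k) (b : U -> V -> W), bilin b ->
    \sum_(p <- x) b p.1 p.2 = \sum_(p <- y) b p.1 p.2.

Definition teq3 (U V X : lmodType k) (x y : tens3 U V X) : Prop :=
  forall (W : lmodType k) (t : U -> V -> X -> W), trilin t ->
    \sum_(p <- x) t p.1.1 p.1.2 p.2 = \sum_(p <- y) t p.1.1 p.1.2 p.2.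

(* (C, Delta, eps) is a k-coalgebra; Delta c is a representative of the
   coproduct of c, i.e. Delta c = sum c' (x) c''. *)
Definition is_coalgebra (C : lmodType k) (Delta : C -> tens2 C C)
    (eps : C -> k) : Prop :=
  [/\ linform eps,
      (forall (a : k) (c d : C),
          teq2 (Delta (a *: c + d))
               ([seq (a *: p.1, p.2) | p <- Delta c] ++ Delta d)),
      (forall c : C,
          teq3 (flatten [seq [seq (q.1, q.2, p.2) | q <- Delta p.1]
                        | p <- Delta c])
               (flatten [seq [seq (p.1, q.1, q.2) | q <- Delta p.2]
                        | p <- Delta c])),
      (forall c : C, \sum_(p <- Delta c) eps p.1 *: p.2 = c) &
      (forall c : C, \sum_(p <- Delta c) eps p.2 *: p.1 = c)].

Definition cocommutative (C : lmodType k) (Delta : C -> tens2 C C) : Prop :=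
  forall c : C, teq2 [seq (p.2, p.1) | p <- Delta c] (Delta c).

Definition is_algebra_str (A : lmodType k) (mul : A -> A -> A) (one : A)
    : Prop :=
  [/\ bilin mul, associative mul, left_id one mul & right_id one mul].

Definition bialg_compat (A : lmodType k) (Delta : A -> tens2 A A)
    (eps : A -> k) (mul : A -> A -> A) (one : A) : Prop :=
  [/\ (forall x y : A, teq2 (Delta (mul x y))
          [seq (mul p.1 q.1, mul p.2 q.2) | p <- Delta x, q <- Delta y]),
      teq2 (Delta one) [:: (one, one)],
      (forall x y : A, eps (mul x y) = eps x * eps y) &
      eps one = 1].

Definition is_bialgebra (H : lmodType k) (mul : H -> H -> H) (one : H)
    (Delta : H -> tens2 H H) (eps : H -> k) : Prop :=
  [/\ is_algebra_str mul one, is_coalgebra Delta eps &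
      bialg_compat Delta eps mul one].

Definition is_bialgebra_on (A : algType k) (Delta : A -> tens2 A A)
    (eps : A -> k) : Prop :=
  is_coalgebra Delta eps /\ bialg_compat Delta eps *%R 1.

Definition is_antipode (A : algType k) (Delta : A -> tens2 A A)
    (eps : A -> k) (S : A -> A) : Prop :=
  [/\ linmap S,
      (forall a : A, \sum_(p <- Delta a) S p.1 * p.2 = eps a *: 1) &
      (forall a : A, \sum_(p <- Delta a) p.1 * S p.2 = eps a *: 1)].

Definition alg_hom (A B : algType k) (f : A -> B) : Prop :=
  [/\ linmap f, (forall x y : A, f (x * y) = f x * f y) & f 1 = 1].

Definition HM_map (H : lmodType k) (Delta : H -> tens2 H H) (eps : H -> k)
    (M B : algType k) (phi : H -> M -> B) : Prop :=
  [/\ bilin phi,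
      (forall (h : H) (m n : M),
          phi h (m * n) = \sum_(p <- Delta h) phi p.1 m * phi p.2 n) &
      (forall h : H, phi h 1 = eps h *: 1)].

Definition module_algebra_action (H : lmodType k) (mul : H -> H -> H)
    (one : H) (Delta : H -> tens2 H H) (eps : H -> k) (A : algType k)
    (act : H -> A -> A) : Prop :=
  [/\ bilin act,
      (forall (h g : H) (x : A), act (mul h g) x = act h (act g x)),
      (forall x : A, act one x = x),
      (forall (h : H) (x y : A),
          act h (x * y) = \sum_(p <- Delta h) act p.1 x * act p.2 y) &
      (forall h : H, act h 1 = eps h *: 1)].

End Defs.

(* Main.v *)
Require Import Defs.
From HB Require Import structures.
From mathcomp Require Import all_boot all_order all_algebra.
From mathcomp Require Import boolp.
From mathcomp Require Import ring.
Import Order.TTheory GRing.Theory Num.Theory.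
Local Open Scope ring_scope.

Module P1.
Local Open Scope ring_scope.
Import Order.TTheory GRing.Theory Num.Theory.
Set Implicit Arguments. Unset Strict Implicit. Unset Printing Implicit Defensive.

Section Lin.
Variable k : comPzRingType.

Lemma linmap0 (U V : lmodType k) (f : U -> V) : linmap f -> f 0 = 0.
Proof.
move=> lf; have := lf 1 0 0; rewrite !scale1r addr0 => /eqP.
by rewrite -subr_eq subrr eq_sym => /eqP.
Qed.

Lemma linmapD (U V : lmodType k) (f : U -> V) : linmap f -> forall x y, f (x + y) = f x + f y.
Proof. by move=> lf x y; have := lf 1 x y; rewrite !scale1r. Qed.

Lemma linmapZ (U V : lmodType k) (f : U -> V) : linmap f -> forall a x, f (a *: x) = a *: f x.
Proof. by move=> lf a x; have := lf a x 0; rewrite addr0 (linmap0 lf) addr0. Qed.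

Lemma linmapN (U V : lmodType k) (f : U -> V) : linmap f -> forall x, f (- x) = - f x.
Proof. by move=> lf x; rewrite -scaleN1r linmapZ // scaleN1r. Qed.

Lemma linmap_sum (U V : lmodType k) (f : U -> V) I (r : seq I) (F : I -> U) :
  linmap f -> f (\sum_(i <- r) F i) = \sum_(i <- r) f (F i).
Proof.
move=> lf; elim: r => [|i r IH]; first by rewrite !big_nil linmap0.
by rewrite !big_cons linmapD // IH.
Qed.

Lemma linmapP (U V : lmodType k) (f : U -> V) :
  (forall x y, f (x + y) = f x + f y) -> (forall a x, f (a *: x) = a *: f x) -> linmap f.
Proof. by move=> fD fZ a x y; rewrite fD fZ. Qed.

Lemma linform0 (U : lmodType k) (f : U -> k) : linform f -> f 0 = 0.
Proof.
move=> lf; have := lf 1 0 0; rewrite !scale1r addr0 mul1r => /eqP.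
by rewrite -subr_eq subrr eq_sym => /eqP.
Qed.

Lemma linformD (U : lmodType k) (f : U -> k) : linform f -> forall x y, f (x + y) = f x + f y.
Proof. by move=> lf x y; have := lf 1 x y; rewrite !scale1r mul1r. Qed.

Lemma linformZ (U : lmodType k) (f : U -> k) : linform f -> forall a x, f (a *: x) = a * f x.
Proof. by move=> lf a x; have := lf a x 0; rewrite addr0 (linform0 lf) addr0. Qed.

Lemma linform_sum (U : lmodType k) (f : U -> k) I (r : seq I) (F : I -> U) :
  linform f -> f (\sum_(i <- r) F i) = \sum_(i <- r) f (F i).
Proof.
move=> lf; elim: r => [|i r IH]; first by rewrite !big_nil linform0.
by rewrite !big_cons linformD // IH.
Qed.

Lemma linmap_sumf (U V : lmodType k) I (r : seq I) (F : I -> U -> V) :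
  (forall i, linmap (F i)) -> linmap (fun x => \sum_(i <- r) F i x).
Proof.
move=> lF a x y; rewrite scaler_sumr -big_split /=.
by apply: eq_bigr => i _; rewrite lF.
Qed.


Lemma bilinM (A : comAlgType k) (U V : lmodType k) (f : U -> A) (g : V -> A) :
  linmap f -> linmap g -> bilin (fun x y => f x * g y).
Proof.
move=> lf lg; split=> [v|u] a x y /=.
  by rewrite lf mulrDl scalerAl.
by rewrite lg mulrDr scalerAr.
Qed.

Lemma linmap_comp (U V W : lmodType k) (f : V -> W) (g : U -> V) :
  linmap f -> linmap g -> linmap (fun x => f (g x)).
Proof. by move=> lf lg a x y; rewrite lg lf. Qed.

Lemma linmap_mull (A : comAlgType k) (U : lmodType k) (f : U -> A) (c : A) :
  linmap f -> linmap (fun x => c * f x).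
Proof. by move=> lf a x y; rewrite lf mulrDr scalerAr. Qed.

Lemma linmap_mulr (A : comAlgType k) (U : lmodType k) (f : U -> A) (c : A) :
  linmap f -> linmap (fun x => f x * c).
Proof. by move=> lf a x y; rewrite lf mulrDl scalerAl. Qed.

Lemma trilinM3 (A : comAlgType k) (U V W : lmodType k) (f : U -> A) (g : V -> A) (h : W -> A) :
  linmap f -> linmap g -> linmap h -> trilin (fun x y z => f x * g y * h z).
Proof.
move=> lf lg lh; split; [|split] => [y z|x z|x y] /=.
- by apply: linmap_mulr; apply: linmap_mulr.
- by apply: linmap_mulr; apply: linmap_mull.
- exact: linmap_mull.
Qed.

Lemma bilin_comp (U V U' V' W : lmodType k) (b : U -> V -> W) (f : U' -> U) (g : V' -> V) :
  bilin b -> linmap f -> linmap g -> bilin (fun x y => b (f x) (g y)).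
Proof.
move=> [b1 b2] lf lg; split=> [v|u] a x y /=.
  by rewrite lf b1.
by rewrite lg b2.
Qed.

Lemma linmap_id (U : lmodType k) : linmap (fun x : U => x).
Proof. by []. Qed.

Lemma bilin_swap (U V W : lmodType k) (b : U -> V -> W) :
  bilin b -> bilin (fun x y => b y x).
Proof. by case=> b1 b2; split=> ? ? ? ? /=; [apply: b2|apply: b1]. Qed.

Lemma bilinZl (U V W : lmodType k) (b : U -> V -> W) :
  bilin b -> forall a x y, b (a *: x) y = a *: b x y.
Proof. by case=> b1 _ a x y; rewrite (linmapZ (b1 y)). Qed.
Lemma bilinZr (U V W : lmodType k) (b : U -> V -> W) :
  bilin b -> forall a x y, b x (a *: y) = a *: b x y.
Proof. by case=> _ b2 a x y; rewrite (linmapZ (b2 x)). Qed.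
Lemma bilin0l (U V W : lmodType k) (b : U -> V -> W) :
  bilin b -> forall y, b 0 y = 0.
Proof. by case=> b1 _ y; rewrite (linmap0 (b1 y)). Qed.
Lemma bilin0r (U V W : lmodType k) (b : U -> V -> W) :
  bilin b -> forall x, b x 0 = 0.
Proof. by case=> _ b2 x; rewrite (linmap0 (b2 x)). Qed.
Lemma bilinDl (U V W : lmodType k) (b : U -> V -> W) :
  bilin b -> forall x x' y, b (x + x') y = b x y + b x' y.
Proof. by case=> b1 _ x x' y; rewrite (linmapD (b1 y)). Qed.
Lemma bilinDr (U V W : lmodType k) (b : U -> V -> W) :
  bilin b -> forall x y y', b x (y + y') = b x y + b x y'.
Proof. by case=> _ b2 x y y'; rewrite (linmapD (b2 x)). Qed.
Lemma bilin_suml (U V W : lmodType k) (b : U -> V -> W) I (r : seq I) (F : I -> U) y :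
  bilin b -> b (\sum_(i <- r) F i) y = \sum_(i <- r) b (F i) y.
Proof. by case=> b1 _; rewrite (linmap_sum _ _ (b1 y)). Qed.
Lemma bilin_sumr (U V W : lmodType k) (b : U -> V -> W) I (r : seq I) (F : I -> V) x :
  bilin b -> b x (\sum_(i <- r) F i) = \sum_(i <- r) b x (F i).
Proof. by case=> _ b2; rewrite (linmap_sum _ _ (b2 x)). Qed.

Lemma bilin_sum (U V W : lmodType k) I (r : seq I) (F : I -> U -> V -> W) :
  (forall i, bilin (F i)) -> bilin (fun x y => \sum_(i <- r) F i x y).
Proof.
move=> bF; split=> [v|u] a x y; rewrite scaler_sumr -big_split /=;
  apply: eq_bigr => i _; case: (bF i) => b1 b2; [exact: b1|exact: b2].
Qed.

Lemma swap22 (R : zmodType) I J K L (A : seq I) (B : seq J) (C : seq K) (D : seq L)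
  (F : I -> J -> K -> L -> R) :
  \sum_(i <- A) \sum_(j <- B) \sum_(x <- C) \sum_(l <- D) F i j x l =
  \sum_(x <- C) \sum_(l <- D) \sum_(i <- A) \sum_(j <- B) F i j x l.
Proof.
under eq_bigr => i _ do rewrite exchange_big.
under eq_bigr => i _ do under eq_bigr => x _ do rewrite exchange_big.
rewrite exchange_big; apply: eq_bigr => x _; exact: exchange_big.
Qed.

Lemma trilin_comp (U V X U' V' X' W : lmodType k) (T : U -> V -> X -> W)
  (f : U' -> U) (g : V' -> V) (h : X' -> X) :
  trilin T -> linmap f -> linmap g -> linmap h ->
  trilin (fun x y z => T (f x) (g y) (h z)).
Proof.
move=> [t1 [t2 t3]] lf lg lh; split; [|split] => [y z|x z|x y] a u u' /=.
- by rewrite lf t1.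
- by rewrite lg t2.
- by rewrite lh t3.
Qed.

Lemma trilin_sum (U V X W : lmodType k) I (r : seq I) (F : I -> U -> V -> X -> W) :
  (forall i, trilin (F i)) -> trilin (fun x y z => \sum_(i <- r) F i x y z).
Proof.
move=> tF; split; [|split] => [y z|x z|x y] a u u'; rewrite scaler_sumr -big_split /=;
  apply: eq_bigr => i _; case: (tF i) => t1 [t2 t3]; [exact: t1|exact: t2|exact: t3].
Qed.

Section Teq.
Variables U V : lmodType k.
Implicit Types l : tens2 U V.

Lemma teq2_refl l : teq2 l l. Proof. by []. Qed.
Lemma teq2_sym l l' : teq2 l l' -> teq2 l' l.
Proof. by move=> e W b bb; rewrite (e W b bb). Qed.
Lemma teq2_trans l1 l2 l3 : teq2 l1 l2 -> teq2 l2 l3 -> teq2 l1 l3.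
Proof. by move=> e1 e2 W b bb; rewrite (e1 W b bb) (e2 W b bb). Qed.
Lemma teq2_cat l1 l1' l2 l2' : teq2 l1 l1' -> teq2 l2 l2' -> teq2 (l1 ++ l2) (l1' ++ l2').
Proof. by move=> e1 e2 W b bb; rewrite !big_cat (e1 W b bb) (e2 W b bb). Qed.
Lemma teq2_scale a l l' : teq2 l l' ->
  teq2 [seq (a *: p.1, p.2) | p <- l] [seq (a *: p.1, p.2) | p <- l'].
Proof.
move=> e W b bb; rewrite !big_map /=.
have ls : linmap (fun x : U => a *: x).
  by move=> c x y; rewrite scalerDr !scalerA mulrC.
exact: (e W (fun x y => b (a *: x) y) (bilin_comp bb ls (@linmap_id V))).
Qed.
Lemma teq2_map (U' V' : lmodType k) (f : U -> U') (g : V -> V') l l' :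
  linmap f -> linmap g -> teq2 l l' ->
  teq2 [seq (f p.1, g p.2) | p <- l] [seq (f p.1, g p.2) | p <- l'].
Proof.
move=> lf lg e W b bb; rewrite !big_map /=.
exact: (e W (fun x y => b (f x) (g y)) (bilin_comp bb lf lg)).
Qed.
End Teq.

Lemma teq2_swap (U V : lmodType k) (l l' : tens2 U V) : teq2 l l' ->
  teq2 [seq (p.2, p.1) | p <- l] [seq (p.2, p.1) | p <- l'].
Proof.
move=> e W b bb; rewrite !big_map /=.
exact: (e W (fun x y => b y x) (bilin_swap bb)).
Qed.

Definition tprod (A B : comAlgType k) (l m : tens2 A B) : tens2 A B :=
  [seq (p.1 * q.1, p.2 * q.2) | p <- l, q <- m].

Lemma teq2_prod (A B : comAlgType k) (l l' m m' : tens2 A B) :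
  teq2 l l' -> teq2 m m' -> teq2 (tprod l m) (tprod l' m').
Proof.
move=> e1 e2 W b bb; rewrite /tprod !big_allpairs_dep /=.
transitivity (\sum_(i <- l') \sum_(j <- m) b (i.1 * j.1) (i.2 * j.2)).
  rewrite exchange_big [RHS]exchange_big /=.
  apply: eq_bigr => j _.
  apply: (e1 W (fun x y => b (x * j.1) (y * j.2))).
  by apply: bilin_comp => //; apply: linmap_mulr.
apply: eq_bigr => i _.
apply: (e2 W (fun x y => b (i.1 * x) (i.2 * y))).
by apply: bilin_comp => //; apply: linmap_mull.
Qed.

End Lin.

Section Coalg.
Variable k : comPzRingType.
Variable C : lmodType k.
Variable D : C -> tens2 C C.
Variable e : C -> k.
Hypothesis hC : is_coalgebra D e.

Definition Dlin := forall (a : k) (c d : C),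
  teq2 (D (a *: c + d)) ([seq (a *: p.1, p.2) | p <- D c] ++ D d).

Lemma sumD_lin' (V : lmodType k) (G : C -> C -> V) : Dlin ->
  bilin G -> linmap (fun c => \sum_(p <- D c) G p.1 p.2).
Proof.
move=> DL bG a x y /=.
rewrite (DL a x y V G bG) big_cat /= big_map scaler_sumr; congr (_ + _).
by apply: eq_bigr => p _; rewrite (linmapZ (proj1 bG _)).
Qed.

Lemma sumD_lin (V : lmodType k) (G : C -> C -> V) :
  bilin G -> linmap (fun c => \sum_(p <- D c) G p.1 p.2).
Proof.
move=> bG a x y /=; case: hC => _ DL _ _ _.
rewrite (DL a x y V G bG) big_cat /= big_map scaler_sumr; congr (_ + _).
by apply: eq_bigr => p _; rewrite (linmapZ (proj1 bG _)).
Qed.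

Lemma coassocP (V : lmodType k) (T : C -> C -> C -> V) : trilin T ->
  forall c, \sum_(p <- D c) \sum_(q <- D p.1) T q.1 q.2 p.2 =
            \sum_(p <- D c) \sum_(q <- D p.2) T p.1 q.1 q.2.
Proof.
move=> tT c; case: hC => _ _ cA _ _.
have := cA c V T tT; rewrite !big_flatten /= !big_map.
by under eq_bigr do rewrite big_map; under [in RHS]eq_bigr do rewrite big_map.
Qed.

Lemma counitL (V : lmodType k) (f : C -> V) : linmap f ->
  forall c, \sum_(p <- D c) e p.1 *: f p.2 = f c.
Proof.
move=> lf c; case: hC => _ _ _ cL _.
by rewrite -{2}(cL c) (linmap_sum _ _ lf); apply: eq_bigr => p _; rewrite (linmapZ lf).
Qed.

Lemma counitR (V : lmodType k) (f : C -> V) : linmap f ->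
  forall c, \sum_(p <- D c) e p.2 *: f p.1 = f c.
Proof.
move=> lf c; case: hC => _ _ _ _ cR.
by rewrite -{2}(cR c) (linmap_sum _ _ lf); apply: eq_bigr => p _; rewrite (linmapZ lf).
Qed.

Lemma counit_e c : \sum_(p <- D c) e p.1 * e p.2 = e c.
Proof.
case: hC => eL _ _ cL _.
by rewrite -{2}(cL c) (linform_sum _ _ eL); apply: eq_bigr => p _; rewrite (linformZ eL).
Qed.

Hypothesis hcc : cocommutative D.

Lemma cocommP (V : lmodType k) (G : C -> C -> V) : bilin G ->
  forall c, \sum_(p <- D c) G p.2 p.1 = \sum_(p <- D c) G p.1 p.2.
Proof. by move=> bG c; have := hcc c bG; rewrite big_map. Qed.

Definition quadlin (V : lmodType k) (G : C -> C -> C -> C -> V) :=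
  [/\ forall y z w, linmap (fun x => G x y z w),
      forall x z w, linmap (fun y => G x y z w),
      forall x y w, linmap (fun z => G x y z w) &
      forall x y z, linmap (fun w => G x y z w)].

Lemma shuffle4 (V : lmodType k) (G : C -> C -> C -> C -> V) : quadlin G ->
  forall c,
  \sum_(p <- D c) \sum_(u <- D p.1) \sum_(v <- D p.2) G u.1 u.2 v.1 v.2 =
  \sum_(p <- D c) \sum_(u <- D p.1) \sum_(v <- D p.2) G u.1 v.1 u.2 v.2.
Proof.
case=> G1 G2 G3 G4 c.
pose T1 a b c' := \sum_(v <- D c') G a b v.1 v.2.
have tT1 : trilin T1.
  split; [|split] => [y z|x z|x y]; rewrite /T1.
  - by apply: linmap_sumf => v; apply: G1.
  - by apply: linmap_sumf => v; apply: G2.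
  - by apply: sumD_lin; split => ? ?; [apply: G3|apply: G4].
have S1 := coassocP tT1 c; rewrite /T1 /= in S1; rewrite S1 {S1}.
have S2 : forall a c', \sum_(u <- D c') \sum_(v <- D u.2) G a u.1 v.1 v.2 =
                       \sum_(u <- D c') \sum_(v <- D u.2) G a v.1 u.1 v.2.
  move=> a c'.
  have tT2 : trilin (fun x y z => G a x y z).
    by split; [|split] => ? ? /=; [apply: G2|apply: G3|apply: G4].
  rewrite -(coassocP tT2).
  have tT3 : trilin (fun x y z => G a y x z).
    by split; [|split] => ? ? /=; [apply: G3|apply: G2|apply: G4].
  rewrite -(coassocP tT3) /=; apply: eq_bigr => u _.
  have bG' : bilin (fun x y => G a x y u.2).
    by split => ? ? /=; [apply: G2|apply: G3].
  by rewrite (cocommP bG').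
under eq_bigr do rewrite S2.
pose T4 a b c' := \sum_(v <- D c') G a v.1 b v.2.
have tT4 : trilin T4.
  split; [|split] => [y z|x z|x y]; rewrite /T4.
  - by apply: linmap_sumf => v; apply: G1.
  - by apply: linmap_sumf => v; apply: G3.
  - by apply: (@sumD_lin _ (fun p q => G x p y q)); split => ? ?; [apply: G2|apply: G4].
by have := coassocP tT4 c; rewrite /T4 /= => ->.
Qed.

End Coalg.

End P1.
Import P1.

Module P2.
Local Open Scope ring_scope.
Import Order.TTheory GRing.Theory Num.Theory.
Set Implicit Arguments. Unset Strict Implicit. Unset Printing Implicit Defensive.

Section HMcon.
Variable k : comPzRingType.
Variable M : comAlgType k.
Variable H : lmodType k.
Variable Delta : H -> tens2 H H.
Variable eps : H -> k.
Hypothesis hco : is_coalgebra Delta eps.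
Hypothesis hcc : cocommutative Delta.

Inductive term : Type :=
| Var of H & M
| Cst of k
| Add of term & term
| Scl of k & term
| Mul of term & term.

Definition tsum (l : seq term) := foldr Add (Cst 0) l.

Inductive rel : term -> term -> Prop :=
| RlinH a h h' m : rel (Var (a *: h + h') m) (Add (Scl a (Var h m)) (Var h' m))
| RlinM a h m m' : rel (Var h (a *: m + m')) (Add (Scl a (Var h m)) (Var h m'))
| Rmul h m n : rel (Var h (m * n)) (tsum [seq Mul (Var p.1 m) (Var p.2 n) | p <- Delta h])
| Rone h : rel (Var h 1) (Cst (eps h)).

Inductive eqv : term -> term -> Prop :=
| Erefl t : eqv t t
| Esym t u : eqv t u -> eqv u t
| Etrans t u v : eqv t u -> eqv u v -> eqv t v
| EAdd t t' u u' : eqv t t' -> eqv u u' -> eqv (Add t u) (Add t' u')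
| EScl a t t' : eqv t t' -> eqv (Scl a t) (Scl a t')
| EMul t t' u u' : eqv t t' -> eqv u u' -> eqv (Mul t u) (Mul t' u')
| EAddA t u v : eqv (Add t (Add u v)) (Add (Add t u) v)
| EAddC t u : eqv (Add t u) (Add u t)
| EAdd0 t : eqv (Add (Cst 0) t) t
| EAddN t : eqv (Add (Scl (-1) t) t) (Cst 0)
| ESclA a b t : eqv (Scl a (Scl b t)) (Scl (a * b) t)
| EScl1 t : eqv (Scl 1 t) t
| ESclDr a t u : eqv (Scl a (Add t u)) (Add (Scl a t) (Scl a u))
| ESclDl a b t : eqv (Scl (a + b) t) (Add (Scl a t) (Scl b t))
| EMulA t u v : eqv (Mul t (Mul u v)) (Mul (Mul t u) v)
| EMulC t u : eqv (Mul t u) (Mul u t)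
| EMul1 t : eqv (Mul (Cst 1) t) t
| EMulDl t u v : eqv (Mul (Add t u) v) (Add (Mul t v) (Mul u v))
| EMulZl a t u : eqv (Mul (Scl a t) u) (Scl a (Mul t u))
| ECst a : eqv (Cst a) (Scl a (Cst 1))
| ERel t u : rel t u -> eqv t u.

Record Q := QI { qc : term -> Prop; qcP : exists t, qc = eqv t }.
HB.instance Definition _ := gen_eqMixin Q.
HB.instance Definition _ := gen_choiceMixin Q.

Definition cls (t : term) : Q := @QI (eqv t) (ex_intro _ t erefl).
Definition repr (q : Q) : term := projT1 (cid (qcP q)).

Lemma clsK q : cls (repr q) = q.
Proof.
case: q => c P; rewrite /repr /=; case: (cid P) => t /= et.
move: P; rewrite et => P; congr QI; exact: Prop_irrelevance.
Qed.

Lemma eqv_cls t u : eqv t u -> cls t = cls u.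
Proof.
move=> e; have E : eqv t = eqv u.
  apply: funext => v; apply: propext; split => h.
    exact: Etrans (Esym e) h.
  exact: Etrans e h.
rewrite /cls; move: (ex_intro _ t _) (ex_intro _ u _); rewrite E => p1 p2.
congr QI; exact: Prop_irrelevance.
Qed.

Lemma cls_eqv t u : cls t = cls u -> eqv t u.
Proof. by move=> /(congr1 qc) /= ->; apply: Erefl. Qed.

Lemma repr_cls t : eqv (repr (cls t)) t.
Proof. by apply: cls_eqv; rewrite clsK. Qed.

Lemma Qind (P : Q -> Prop) : (forall t, P (cls t)) -> forall q, P q.
Proof. by move=> Pt q; rewrite -(clsK q). Qed.

Definition qadd q r := cls (Add (repr q) (repr r)).
Definition qopp q := cls (Scl (-1) (repr q)).
Definition qscl a q := cls (Scl a (repr q)).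
Definition qmul q r := cls (Mul (repr q) (repr r)).
Definition q0 := cls (Cst 0).
Definition q1 := cls (Cst 1).

Lemma qaddE t u : qadd (cls t) (cls u) = cls (Add t u).
Proof. by apply: eqv_cls; apply: EAdd; apply: repr_cls. Qed.
Lemma qoppE t : qopp (cls t) = cls (Scl (-1) t).
Proof. by apply: eqv_cls; apply: EScl; apply: repr_cls. Qed.
Lemma qsclE a t : qscl a (cls t) = cls (Scl a t).
Proof. by apply: eqv_cls; apply: EScl; apply: repr_cls. Qed.
Lemma qmulE t u : qmul (cls t) (cls u) = cls (Mul t u).
Proof. by apply: eqv_cls; apply: EMul; apply: repr_cls. Qed.

Lemma qaddA : associative qadd.
Proof.
elim/Qind => t; elim/Qind => u; elim/Qind => v.
by rewrite !qaddE; apply: eqv_cls; apply: EAddA.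
Qed.
Lemma qaddC : commutative qadd.
Proof. by elim/Qind => t; elim/Qind => u; rewrite !qaddE; apply: eqv_cls; apply: EAddC. Qed.
Lemma qadd0 : left_id q0 qadd.
Proof. by elim/Qind => t; rewrite qaddE; apply: eqv_cls; apply: EAdd0. Qed.
Lemma qaddN : left_inverse q0 qopp qadd.
Proof. by elim/Qind => t; rewrite qoppE qaddE; apply: eqv_cls; apply: EAddN. Qed.

HB.instance Definition _ := GRing.isZmodule.Build Q qaddA qaddC qadd0 qaddN.

Lemma qsclA a b v : qscl a (qscl b v) = qscl (a * b) v.
Proof. by elim/Qind: v => t; rewrite !qsclE; apply: eqv_cls; apply: ESclA. Qed.
Lemma qscl1 : left_id 1 qscl.
Proof. by elim/Qind => t; rewrite !qsclE; apply: eqv_cls; apply: EScl1. Qed.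
Lemma qsclDr : right_distributive qscl qadd.
Proof.
move=> a; elim/Qind => t; elim/Qind => u.
by rewrite !(qsclE, qaddE); apply: eqv_cls; apply: ESclDr.
Qed.
Lemma qsclDl v : {morph qscl^~ v : a b / a + b >-> qadd a b}.
Proof.
move=> a b; elim/Qind: v => t.
by rewrite !(qsclE, qaddE); apply: eqv_cls; apply: ESclDl.
Qed.

HB.instance Definition _ := GRing.Zmodule_isLmodule.Build k Q qsclA qscl1 qsclDr qsclDl.

Lemma qmulA : associative qmul.
Proof.
elim/Qind => t; elim/Qind => u; elim/Qind => v.
by rewrite !qmulE; apply: eqv_cls; apply: EMulA.
Qed.
Lemma qmulC : commutative qmul.
Proof. by elim/Qind => t; elim/Qind => u; rewrite !qmulE; apply: eqv_cls; apply: EMulC. Qed.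
Lemma qmul1 : left_id q1 qmul.
Proof. by elim/Qind => t; rewrite qmulE; apply: eqv_cls; apply: EMul1. Qed.
Lemma qmulDl : left_distributive qmul qadd.
Proof.
elim/Qind => t; elim/Qind => u; elim/Qind => v.
by rewrite !(qmulE, qaddE); apply: eqv_cls; apply: EMulDl.
Qed.

HB.instance Definition _ := GRing.Zmodule_isComPzRing.Build Q qmulA qmulC qmul1 qmulDl.

Lemma clsD t u : cls t + cls u = cls (Add t u). Proof. exact: qaddE. Qed.
Lemma clsZ a t : a *: cls t = cls (Scl a t). Proof. exact: qsclE. Qed.
Lemma clsM t u : cls t * cls u = cls (Mul t u). Proof. exact: qmulE. Qed.
Lemma cls1 : cls (Cst 1) = 1. Proof. by []. Qed.
Lemma cls0 : cls (Cst 0) = 0. Proof. by []. Qed.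
Lemma clsC a : cls (Cst a) = a *: (1 : Q).
Proof. by rewrite -cls1 clsZ; apply: eqv_cls; apply: ECst. Qed.
Lemma cls_tsum l : cls (tsum l) = \sum_(t <- l) cls t.
Proof. by elim: l => [|t l IH] /=; rewrite ?big_nil ?big_cons -?IH ?clsD. Qed.

Lemma qscalerAl a (u v : Q) : a *: (u * v) = (a *: u) * v.
Proof.
elim/Qind: u => t; elim/Qind: v => u.
by rewrite !(clsM, clsZ); apply: eqv_cls; apply: Esym; apply: EMulZl.
Qed.


Section Eval.
Variable A : comPzRingType.
Variable sc : k -> A.
Variable f : H -> M -> A.

Fixpoint evalT (t : term) : A :=
  match t with
  | Var h m => f h m
  | Cst a => sc a
  | Add t u => evalT t + evalT u
  | Scl a t => sc a * evalT t
  | Mul t u => evalT t * evalT u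
  end.

Lemma evalT_tsum l : evalT (tsum l) = sc 0 + \sum_(t <- l) evalT t.
Proof.
elim: l => [|t l IH] /=; first by rewrite big_nil addr0.
by rewrite big_cons IH addrCA.
Qed.

Hypothesis scD : forall a b, sc (a + b) = sc a + sc b.
Hypothesis scM : forall a b, sc (a * b) = sc a * sc b.
Hypothesis sc1 : sc 1 = 1.

Lemma sc0 : sc 0 = 0.
Proof. by have := scD 0 0; rewrite addr0 => /eqP; rewrite -subr_eq subrr eq_sym => /eqP. Qed.

Lemma scN1 : sc (-1) = -1.
Proof. by apply/eqP; rewrite -subr_eq0 opprK -sc1 -scD addNr sc0. Qed.

Hypothesis frel : forall t u, rel t u -> evalT t = evalT u.

Lemma evalT_eqv t u : eqv t u -> evalT t = evalT u.
Proof.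
elim=> {t u} /=.
- by [].
- by move=> t u _ ->.
- by move=> t u v _ -> _ ->.
- by move=> t t' u u' _ -> _ ->.
- by move=> a t t' _ ->.
- by move=> t t' u u' _ -> _ ->.
- by move=> t u v; rewrite addrA.
- by move=> t u; rewrite addrC.
- by move=> t; rewrite sc0 add0r.
- by move=> t; rewrite scN1 mulN1r addNr sc0.
- by move=> a b t; rewrite mulrA scM.
- by move=> t; rewrite sc1 mul1r.
- by move=> a t u; rewrite mulrDr.
- by move=> a b t; rewrite scD mulrDl.
- by move=> t u v; rewrite mulrA.
- by move=> t u; rewrite mulrC.
- by move=> t; rewrite sc1 mul1r.
- by move=> t u v; rewrite mulrDl.
- by move=> a t u; rewrite mulrA.
- by move=> a; rewrite sc1 mulr1.
- exact: frel.
Qed.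

End Eval.

Lemma eps_counit h : \sum_(p <- Delta h) eps p.1 * eps p.2 = eps h.
Proof.
case: hco => epsL _ _ cuL _.
by rewrite -{2}(cuL h) (linform_sum _ _ epsL); apply: eq_bigr => p _; rewrite (linformZ epsL).
Qed.

Section EvalAlg.
Variable B : comAlgType k.
Variable psi : H -> M -> B.
Hypothesis hpsi : HM_map Delta eps psi.

Definition evalA := evalT (fun a : k => a%:A) psi.

Lemma algD (a b : k) : (a + b)%:A = a%:A + b%:A :> B.
Proof. by rewrite scalerDl. Qed.
Lemma algM (a b : k) : (a * b)%:A = a%:A * b%:A :> B.
Proof. by rewrite -scalerAl mul1r scalerA. Qed.
Lemma alg1 : (1 : k)%:A = 1 :> B.
Proof. by rewrite scale1r. Qed.

Lemma evalA_rel t u : rel t u -> evalA t = evalA u.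
Proof.
case: hpsi => [[bl br] pm p1].
case=> /= [a h h' m|a h m m'|h m n|h].
- by rewrite bl mulr_algl.
- by rewrite br mulr_algl.
- rewrite /evalA evalT_tsum scale0r add0r big_map pm; apply: eq_bigr => p _ //.
- by rewrite p1.
Qed.

Lemma evalA_eqv t u : eqv t u -> evalA t = evalA u.
Proof. apply: evalT_eqv; [exact: algD|exact: algM|exact: alg1|exact: evalA_rel]. Qed.

End EvalAlg.

Lemma HM_map_M : HM_map Delta eps (fun h (m : M) => eps h *: m).
Proof.
case: hco => epsL _ _ _ _.
split.
- split=> [v|u] a x y /=; first by rewrite epsL scalerDl scalerA.
  by rewrite scalerDr !scalerA mulrC.
- move=> h m n; rewrite -{1}eps_counit scaler_suml; apply: eq_bigr => p _.
  by rewrite -scalerAl -scalerAr !scalerA mulrC.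
- by [].
Qed.

Lemma Q_nonzero : (1 : Q) != 0.
Proof.
apply/eqP => /cls_eqv /(evalA_eqv HM_map_M) /=.
by rewrite !scale1r scale0r => /eqP; rewrite oner_eq0.
Qed.

End HMcon.

End P2.
Import P2.

Module P3.
Local Open Scope ring_scope.
Import Order.TTheory GRing.Theory Num.Theory.
Set Implicit Arguments. Unset Strict Implicit. Unset Printing Implicit Defensive.

Section HMT.
Variable k : comPzRingType.
Variable M : comAlgType k.
Variable H : lmodType k.
Variable Delta : H -> tens2 H H.
Variable eps : H -> k.
Hypothesis hco : is_coalgebra Delta eps.

Local Notation Q := (Q M Delta eps).
Local Notation cls := (cls Delta eps).
Local Notation eqv := (eqv Delta eps).
Local Notation term := (term M H).

Definition HMT (_ : is_coalgebra Delta eps) : Type := Q.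
HB.instance Definition _ := GRing.ComPzRing.copy (HMT hco) Q.
HB.instance Definition _ := GRing.Lmodule.copy (HMT hco) Q.
HB.instance Definition _ := GRing.PzSemiRing_isNonZero.Build (HMT hco) (Q_nonzero M hco).
HB.instance Definition _ := GRing.Lmodule_isLalgebra.Build k (HMT hco) (@qscalerAl _ _ _ Delta eps).
HB.instance Definition _ := GRing.Lalgebra_isComAlgebra.Build k (HMT hco).

Definition HMc : comAlgType k := HMT hco.
Definition phi (h : H) (m : M) : HMc := cls (Var h m).


Lemma cls_rel (t u : term) : P2.rel Delta eps t u -> cls t = cls u.
Proof. by move=> r; apply: eqv_cls; apply: ERel. Qed.

Lemma phi_HM : HM_map Delta eps phi.
Proof.
split.
- split=> [v|u] a x y.
    by rewrite /phi (cls_rel (RlinH _ _ _ _ _ _)) -clsD -clsZ.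
  by rewrite /phi (cls_rel (RlinM _ _ _ _ _ _)) -clsD -clsZ.
- move=> h m n; rewrite /phi (cls_rel (Rmul _ _ _ _ _)) cls_tsum big_map.
  by apply: eq_bigr => p _; rewrite -clsM.
- by move=> h; rewrite /phi (cls_rel (Rone _ _ _ _)) clsC.
Qed.

Section Univ.
Variable B : comAlgType k.
Variable psi : H -> M -> B.
Hypothesis hpsi : HM_map Delta eps psi.

Definition univ (q : HMc) : B := evalA psi (P2.repr q).

Lemma univ_cls t : univ (cls t) = evalA psi t.
Proof. exact: (evalA_eqv hpsi (repr_cls Delta eps t)). Qed.

Lemma univ_hom : alg_hom univ.
Proof.
split.
- move=> a; elim/Qind => t; elim/Qind => u.
  by rewrite clsZ clsD !univ_cls /= mulr_algl.
- by elim/Qind => t; elim/Qind => u; rewrite clsM !univ_cls.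
- by rewrite -cls1 univ_cls /= scale1r.
Qed.

Lemma univ_phi h m : univ (phi h m) = psi h m.
Proof. by rewrite /phi univ_cls. Qed.

Lemma univ_uniq (g : HMc -> B) : alg_hom g ->
  (forall h m, g (phi h m) = psi h m) -> g =1 univ.
Proof.
case=> gl gm g1 gphi; elim/Qind => t; rewrite univ_cls.
elim: t => /= [h m|a|t IHt u IHu|a t IHt|t IHt u IHu].
- exact: gphi.
- by rewrite clsC (linmapZ gl) g1.
- by rewrite -clsD (linmapD gl) IHt IHu.
- by rewrite -clsZ (linmapZ gl) IHt mulr_algl.
- by rewrite -clsM gm IHt IHu.
Qed.

End Univ.

End HMT.

End P3.
Import P3.

Module P6.
Local Open Scope ring_scope.
Import Order.TTheory GRing.Theory Num.Theory.
Set Implicit Arguments. Unset Strict Implicit. Unset Printing Implicit Defensive.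

Section Antipode.
Variable k : comPzRingType.
Variable M : comAlgType k.
Variable D : M -> tens2 M M.
Variable e : M -> k.
Hypothesis hM : is_bialgebra_on D e.
Variable S : M -> M.
Hypothesis hS : is_antipode D e S.

Let hMco : is_coalgebra D e. Proof. by case: hM. Qed.
Let Dmul : forall x y : M, teq2 (D (x * y))
          [seq (p.1 * q.1, p.2 * q.2) | p <- D x, q <- D y].
Proof. by case: hM => _ []. Qed.
Let Done : teq2 (D 1) [:: (1, 1)].
Proof. by case: hM => _ []. Qed.
Let eM x y : e (x * y) = e x * e y.
Proof. by case: hM => _ []. Qed.
Let e1 : e 1 = 1.
Proof. by case: hM => _ []. Qed.
Let SL : linmap S. Proof. by case: hS. Qed.
Let AL a : \sum_(p <- D a) S p.1 * p.2 = e a *: 1. Proof. by case: hS. Qed.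
Let AR a : \sum_(p <- D a) p.1 * S p.2 = e a *: 1. Proof. by case: hS. Qed.

Lemma S1 : S 1 = 1.
Proof.
have := AL 1; rewrite e1 scale1r.
have bb : bilin (fun u v : M => S u * v) by apply: bilinM.
by rewrite (Done bb) big_cons big_nil /= addr0 mulr1.
Qed.

Lemma Smul x y : S (x * y) = S x * S y.
Proof.
have lid : linmap (fun a : M => a) by [].
transitivity (\sum_(p <- D x) \sum_(q <- D y) \sum_(r <- D p.2) \sum_(s <- D q.2)
   S (p.1 * q.1) * (r.1 * S r.2) * (s.1 * S s.2)).
  rewrite -(counitR hMco (f := fun a => S (a * y))); last first.
    by apply: linmap_comp => //; apply: linmap_mulr.
  apply: eq_bigr => p _.
  rewrite -(counitR hMco (f := fun b => S (p.1 * b))); last first.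
    by apply: linmap_comp => //; apply: linmap_mull.
  rewrite scaler_sumr; apply: eq_bigr => q _.
  symmetry; under eq_bigr => r _ do rewrite -mulr_sumr (AR q.2).
  by rewrite -mulr_suml -mulr_sumr (AR p.2) !mulr_algr !scalerA mulrC.
transitivity (\sum_(p <- D x) \sum_(r <- D p.1) \sum_(q <- D y) \sum_(s <- D q.1)
   S (r.1 * s.1) * (r.2 * S p.2) * (s.2 * S q.2)).
  rewrite exchange_big /=.
  have T1 : forall q : M * M, trilin (fun a b c => \sum_(s <- D q.2)
      S (a * q.1) * (b * S c) * (s.1 * S s.2)).
    move=> q; apply: trilin_sum => s; split; [|split] => [b c|a c|a b] /=.
    - apply: linmap_mulr; apply: linmap_mulr; apply: linmap_comp => //; exact: linmap_mulr.
    - by apply: linmap_mulr; apply: linmap_mull; apply: linmap_mulr.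
    - by apply: linmap_mulr; apply: linmap_mull; apply: linmap_mull.
  under eq_bigr => q _ do (have := coassocP hMco (T1 q) x; rewrite /= => <-).
  rewrite exchange_big /=; apply: eq_bigr => p _; rewrite exchange_big /=.
  apply: eq_bigr => r _.
  have T2 : trilin (fun a b c => S (r.1 * a) * (r.2 * S p.2) * (b * S c)).
    split; [|split] => [b c|a c|a b] /=.
    - by apply: linmap_mulr; apply: linmap_mulr; apply: linmap_comp => //; apply: linmap_mull.
    - by apply: linmap_mull; apply: linmap_mulr.
    - by apply: linmap_mull; apply: linmap_mull; apply: linmap_comp.
  by have := coassocP hMco T2 y; rewrite /= => ->.
transitivity (\sum_(p <- D x) \sum_(q <- D y) (e p.1 * e q.1) *: (S p.2 * S q.2)).
  apply: eq_bigr => p _; rewrite exchange_big /=; apply: eq_bigr => q _.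
  rewrite -eM -[S p.2 * S q.2]mul1r scalerAl -(AL (p.1 * q.1)).
  have bb : bilin (fun u v : M => S u * v) by apply: bilinM.
  rewrite (Dmul p.1 q.1 bb) big_allpairs_dep /= mulr_suml; apply: eq_bigr => r _.
  rewrite mulr_suml; apply: eq_bigr => s _; ring.
rewrite -(counitL hMco SL x) -(counitL hMco SL y) mulr_suml; apply: eq_bigr => p _.
rewrite mulr_sumr; apply: eq_bigr => q _.
by rewrite -scalerAl -scalerAr scalerA.
Qed.

End Antipode.

End P6.
Import P6.

Module P4.
Local Open Scope ring_scope.
Import Order.TTheory GRing.Theory Num.Theory.
Set Implicit Arguments. Unset Strict Implicit. Unset Printing Implicit Defensive.

Section Act.
Variable k : comPzRingType.
Variable M : comAlgType k.
Variable H : lmodType k.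
Variable Delta : H -> tens2 H H.
Variable eps : H -> k.
Hypothesis hco : is_coalgebra Delta eps.
Hypothesis hcc : cocommutative Delta.
Variable mul : H -> H -> H.
Variable one : H.
Hypothesis hbi : is_bialgebra mul one Delta eps.

Local Notation HM := (HMc M hco).
Local Notation term := (term M H).
Local Notation cls := (fun t => (cls Delta eps t : HM)).

Fixpoint actT (t : term) (h : H) : HM :=
  match t with
  | Var g m => cls (Var (mul h g) m)
  | Cst a => (a * eps h) *: 1
  | Add t u => actT t h + actT u h
  | Scl a t => a *: actT t h
  | Mul t u => \sum_(p <- Delta h) actT t p.1 * actT u p.2
  end.

Lemma epsL : linform eps. Proof. by case: hco. Qed.
Lemma mulL : bilin mul. Proof. by case: hbi => -[]. Qed.
Lemma mulA : associative mul. Proof. by case: hbi => -[]. Qed.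
Lemma mul1h : left_id one mul. Proof. by case: hbi => -[]. Qed.
Lemma Dmul : forall x y : H, teq2 (Delta (mul x y))
          [seq (mul p.1 q.1, mul p.2 q.2) | p <- Delta x, q <- Delta y].
Proof. by case: hbi => _ _ []. Qed.
Lemma Done : teq2 (Delta one) [:: (one, one)].
Proof. by case: hbi => _ _ []. Qed.
Lemma epsM x y : eps (mul x y) = eps x * eps y.
Proof. by case: hbi => _ _ []. Qed.
Lemma eps1 : eps one = 1.
Proof. by case: hbi => _ _ []. Qed.

Lemma actT_lin t : linmap (actT t).
Proof.
elim: t => /= [g m|a|t IHt u IHu|a t IHt|t IHt u IHu] b x y.
- by rewrite (proj1 mulL) (cls_rel (RlinH _ _ _ _ _ _)) -clsD -clsZ.
- by rewrite epsL mulrDr scalerDl mulrCA scalerA.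
- by rewrite IHt IHu scalerDr addrACA.
- by rewrite IHt scalerDr !scalerA mulrC.
- by apply: (sumD_lin hco (G := fun p q => actT t p * actT u q)); apply: bilinM.
Qed.

Lemma actT_tsum l h : actT (tsum l) h = \sum_(t <- l) actT t h.
Proof.
elim: l => [|t l IH] /=; first by rewrite big_nil mul0r scale0r.
by rewrite big_cons IH.
Qed.

Lemma actT_eqv t u : eqv Delta eps t u -> forall h, actT t h = actT u h.
Proof.
elim=> {t u} /=.
- by [].
- by move=> t u _ IH h; rewrite IH.
- by move=> t u v _ IH1 _ IH2 h; rewrite IH1 IH2.
- by move=> t t' u u' _ IH1 _ IH2 h; rewrite IH1 IH2.
- by move=> a t t' _ IH h; rewrite IH.
- by move=> t t' u u' _ IH1 _ IH2 h; apply: eq_bigr => p _; rewrite IH1 IH2.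
- by move=> t u v h; rewrite addrA.
- by move=> t u h; rewrite addrC.
- by move=> t h; rewrite mul0r scale0r add0r.
- by move=> t h; rewrite scaleN1r addNr mul0r scale0r.
- by move=> a b t h; rewrite scalerA.
- by move=> t h; rewrite scale1r.
- by move=> a t u h; rewrite scalerDr.
- by move=> a b t h; rewrite scalerDl.
- move=> t u v h.
  under eq_bigr do rewrite mulr_sumr; under [RHS]eq_bigr do rewrite mulr_suml.
  have := coassocP hco (trilinM3 (actT_lin t) (actT_lin u) (actT_lin v)) h => /= ->.
  by apply: eq_bigr => p _; apply: eq_bigr => q _; rewrite mulrA.
- move=> t u h.
  have := cocommP hcc (bilinM (actT_lin u) (actT_lin t)) h => /= <-.
  by apply: eq_bigr => p _; rewrite mulrC.
- move=> t h.
  under eq_bigr do rewrite mul1r -scalerAl mul1r.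
  exact: (counitL hco (actT_lin t)).
- by move=> t u v h; rewrite -big_split /=; apply: eq_bigr => p _; rewrite mulrDl.
- by move=> a t u h; rewrite scaler_sumr; apply: eq_bigr => p _; rewrite scalerAl.
- by move=> a h; rewrite mul1r scalerA.
- move=> t u; case=> /= [a g g' m|a g m m'|g m n|g] h.
  + by rewrite (proj2 mulL) (cls_rel (RlinH _ _ _ _ _ _)) -clsD -clsZ.
  + by rewrite (cls_rel (RlinM _ _ _ _ _ _)) -clsD -clsZ.
  + rewrite actT_tsum big_map (cls_rel (Rmul _ _ _ _ _)) cls_tsum big_map.
    under eq_bigr do rewrite -clsM.
    have bb : bilin (fun x y => cls (Var x m) * cls (Var y n)).
      apply: bilinM => b x y /=; by rewrite (cls_rel (RlinH _ _ _ _ _ _)) -clsD -clsZ.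
    have := Dmul h g bb => /= ->.
    by rewrite big_allpairs_dep /= exchange_big.
  + by rewrite (cls_rel (Rone _ _ _ _)) clsC epsM mulrC.
Qed.

Definition act (h : H) (q : HM) : HM := actT (P2.repr q) h.

Lemma act_cls h t : act h (cls t) = actT t h.
Proof. exact: (actT_eqv (repr_cls Delta eps t)). Qed.

Lemma act_linr h : linmap (act h).
Proof.
move=> a; elim/Qind => t; elim/Qind => u.
by rewrite clsZ clsD !act_cls.
Qed.

Lemma act_mulx h (x y : HM) : act h (x * y) = \sum_(p <- Delta h) act p.1 x * act p.2 y.
Proof.
elim/Qind: x => t; elim/Qind: y => u.
by rewrite clsM !act_cls /=; apply: eq_bigr => p _; rewrite !act_cls.
Qed.

Lemma act_1 h : act h 1 = eps h *: 1.
Proof. by rewrite -cls1 act_cls /= mul1r. Qed.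

Lemma actT_mul t : forall h g, actT t (mul h g) = act h (actT t g).
Proof.
elim: t => /= [g0 m|a|t IHt u IHu|a t IHt|t IHt u IHu] h g.
- by rewrite act_cls /= mulA.
- rewrite (linmapZ (act_linr h)) act_1 scalerA epsM; congr (_ *: _); rewrite mulrAC mulrA.
  by [].

- by rewrite (linmapD (act_linr h)) IHt IHu.
- by rewrite (linmapZ (act_linr h)) IHt.
- rewrite (linmap_sum _ _ (act_linr h)).
  under [RHS]eq_bigr do rewrite act_mulx.
  have := Dmul h g (bilinM (actT_lin t) (actT_lin u)) => /= ->.
  rewrite big_allpairs_dep /= exchange_big; apply: eq_bigr => q _; apply: eq_bigr => p _.
  by rewrite IHt IHu.
Qed.

Lemma actT_one t : actT t one = cls t.
Proof.
elim: t => /= [g m|a|t IHt u IHu|a t IHt|t IHt u IHu].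
- by rewrite mul1h.
- by rewrite eps1 mulr1 clsC.
- by rewrite IHt IHu clsD.
- by rewrite IHt clsZ.
- have := Done (bilinM (actT_lin t) (actT_lin u)) => /= ->.
  by rewrite big_cons big_nil addr0 IHt IHu clsM.
Qed.

Lemma act_module : module_algebra_action mul one Delta eps act.
Proof.
split.
- split=> [v|u].
    by elim/Qind: v => t a x y; rewrite !act_cls; apply: actT_lin.
  exact: act_linr.
- by move=> h g; elim/Qind => t; rewrite !act_cls actT_mul.
- by elim/Qind => t; rewrite act_cls actT_one.
- exact: act_mulx.
- exact: act_1.
Qed.

Lemma act_phi h1 h2 m : act h1 (phi hco h2 m) = phi hco (mul h1 h2) m.
Proof. by rewrite /phi act_cls. Qed.

End Act.

End P4.
Import P4.

Module P5.
Local Open Scope ring_scope.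
Import Order.TTheory GRing.Theory Num.Theory.
Set Implicit Arguments. Unset Strict Implicit. Unset Printing Implicit Defensive.

Section Bialg.
Variable k : comPzRingType.
Variable M : comAlgType k.
Variable H : lmodType k.
Variable Delta : H -> tens2 H H.
Variable eps : H -> k.
Hypothesis hco : is_coalgebra Delta eps.
Hypothesis hcc : cocommutative Delta.
Variable DeltaM : M -> tens2 M M.
Variable epsM : M -> k.
Hypothesis hM : is_bialgebra_on DeltaM epsM.
Hypothesis hMc : cocommutative DeltaM.

Local Notation HM := (HMc M hco).
Local Notation term := (term M H).
Local Notation cls := (fun t => (cls Delta eps t : HM)).

Lemma hMco : is_coalgebra DeltaM epsM. Proof. by case: hM. Qed.
Lemma DMmul : forall x y : M, teq2 (DeltaM (x * y))
          [seq (p.1 * q.1, p.2 * q.2) | p <- DeltaM x, q <- DeltaM y].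
Proof. by case: hM => _ []. Qed.
Lemma DMone : teq2 (DeltaM 1) [:: (1, 1)].
Proof. by case: hM => _ []. Qed.
Lemma epsMM x y : epsM (x * y) = epsM x * epsM y.
Proof. by case: hM => _ []. Qed.
Lemma epsM1 : epsM 1 = 1.
Proof. by case: hM => _ []. Qed.
Lemma epsML : linform epsM. Proof. by case: hMco. Qed.
Lemma epsL' : linform eps. Proof. by case: hco. Qed.

Definition V (x : H) (y : M) : HM := phi hco x y.
Lemma V_linH y : linmap (fun x => V x y).
Proof. by case: (phi_HM M hco) => -[b1 b2] _ _; apply: b1. Qed.
Lemma V_linM x : linmap (V x).
Proof. by case: (phi_HM M hco) => -[b1 b2] _ _; apply: b2. Qed.
Lemma V_mul x y z : V x (y * z) = \sum_(u <- Delta x) V u.1 y * V u.2 z.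
Proof. by case: (phi_HM M hco) => _ pm _; apply: pm. Qed.
Lemma V_1 x : V x 1 = eps x *: 1.
Proof. by case: (phi_HM M hco) => _ _ p1; apply: p1. Qed.

Fixpoint DT (t : term) : tens2 HM HM :=
  match t with
  | Var h m => [seq (V p.1 q.1, V p.2 q.2) | p <- Delta h, q <- DeltaM m]
  | Cst a => [:: (a *: 1, 1)]
  | Add t u => DT t ++ DT u
  | Scl a t => [seq (a *: p.1, p.2) | p <- DT t]
  | Mul t u => tprod (DT t) (DT u)
  end.

Section SB.
Variable W : lmodType k.
Variable b : HM -> HM -> W.
Hypothesis bb : bilin b.

Definition SB (l : tens2 HM HM) := \sum_(p <- l) b p.1 p.2.

Lemma SB_Var h m : SB (DT (Var h m)) =
  \sum_(p <- Delta h) \sum_(q <- DeltaM m) b (V p.1 q.1) (V p.2 q.2).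
Proof. by rewrite /SB /= big_allpairs_dep. Qed.

Lemma SB_tsum l : SB (DT (tsum l)) = \sum_(t <- l) SB (DT t).
Proof.
elim: l => [|t l IH] /=.
  by rewrite /SB big_nil big_cons big_nil scale0r (bilin0l bb) addr0.
by rewrite /SB big_cat big_cons -IH.
Qed.

Lemma SB_Mul t u : SB (DT (Mul t u)) =
  \sum_(p <- DT t) \sum_(q <- DT u) b (p.1 * q.1) (p.2 * q.2).
Proof. by rewrite /SB /= /tprod big_allpairs_dep. Qed.

Lemma bilin_VV (F : HM -> HM -> HM -> HM -> W) :
  (forall x1 x2 y1 y2, F x1 x2 y1 y2 = b x1 y1) -> True.
Proof. by []. Qed.

End SB.

Lemma bilinV (W : lmodType k) (b : HM -> HM -> W) : bilin b ->
  forall y1 y2, bilin (fun x1 x2 => b (V x1 y1) (V x2 y2)).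
Proof. by move=> bb y1 y2; apply: bilin_comp => //; apply: V_linH. Qed.

Lemma bilinV' (W : lmodType k) (b : HM -> HM -> W) : bilin b ->
  forall x1 x2, bilin (fun y1 y2 => b (V x1 y1) (V x2 y2)).
Proof. by move=> bb x1 x2; apply: bilin_comp => //; apply: V_linM. Qed.

Lemma DT_eqv t u : eqv Delta eps t u -> teq2 (DT t) (DT u).
Proof.
elim=> {t u} /=.
- by [].
- by move=> t u _; apply: teq2_sym.
- by move=> t u v _ e1 _ e2; apply: teq2_trans e1 e2.
- by move=> t t' u u' _ e1 _ e2; apply: teq2_cat.
- by move=> a t t' _ e; apply: teq2_scale.
- by move=> t t' u u' _ e1 _ e2; apply: teq2_prod.
- by move=> t u v W b bb; rewrite catA.
- by move=> t u W b bb; rewrite !big_cat /= addrC.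
- by move=> t W b bb; rewrite big_cons scale0r (bilin0l bb) add0r.
- move=> t W b bb; rewrite big_cat /= big_map /= big_cons big_nil scale0r (bilin0l bb) addr0.
  by rewrite -big_split /= big1 // => p _; rewrite (bilinZl bb) scaleN1r addNr.
- by move=> a c t W b bb; rewrite !big_map; apply: eq_bigr => p _; rewrite /= scalerA.
- by move=> t W b bb; rewrite big_map; apply: eq_bigr => p _; rewrite scale1r.
- by move=> a t u W b bb; rewrite map_cat.
- move=> a c t W b bb; rewrite big_cat /= !big_map.
  by under eq_bigr do rewrite /= scalerDl (bilinDl bb); rewrite big_split.
- move=> t u v W b bb; rewrite /tprod !big_allpairs_dep /=.
  apply: eq_bigr => p _; rewrite big_allpairs_dep /=.
  apply: eq_bigr => q _; apply: eq_bigr => r _; by rewrite !mulrA.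
- move=> t u W b bb; rewrite /tprod !big_allpairs_dep /= exchange_big /=.
  by apply: eq_bigr => p _; apply: eq_bigr => q _; rewrite !(mulrC p.1) !(mulrC p.2).
- by move=> t W b bb; rewrite /tprod big_allpairs_dep big_cons big_nil /= addr0;
    apply: eq_bigr => p _; rewrite scale1r !mul1r.
- by move=> t u v W b bb; rewrite /tprod allpairs_cat.
- move=> a t u W b bb; rewrite /tprod big_map !big_allpairs_dep /= big_map /=.
  by apply: eq_bigr => p _; apply: eq_bigr => q _; rewrite scalerAl.
- by move=> a W b bb; rewrite !big_cons !big_nil scale1r.
- move=> t u; case=> [a h h' m|a h m m'|h m n|h] W b bb.
  + rewrite big_cat /= big_map -/(SB b _) -/(SB b _) !SB_Var.
    have := sumD_lin hco (@bilin_sum _ _ _ _ _ (DeltaM m) (fun q x1 x2 => b (V x1 q.1) (V x2 q.2)) (fun q => bilinV bb q.1 q.2)) a h h'.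
    move=> /= ->; rewrite scaler_sumr /= big_allpairs_dep; congr (_ + _).
    apply: eq_bigr => p _; rewrite scaler_sumr; apply: eq_bigr => q _.
    by rewrite (bilinZl bb).
  + rewrite big_cat /= big_map -/(SB b _) -/(SB b _) !SB_Var.
    rewrite exchange_big [X in _ = _ + X]exchange_big /=.
    have := sumD_lin hMco (@bilin_sum _ _ _ _ _ (Delta h) (fun p y1 y2 => b (V p.1 y1) (V p.2 y2)) (fun p => bilinV' bb p.1 p.2)) a m m'.
    move=> /= ->; rewrite scaler_sumr /= big_allpairs_dep; congr (_ + _).
    rewrite [RHS]exchange_big; apply: eq_bigr => q _; rewrite scaler_sumr; apply: eq_bigr => p _.
    by rewrite (bilinZl bb).
  + rewrite -/(SB b _) -/(SB b _) SB_Var (SB_tsum bb) big_map.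
    pose G a1 a2 c1 c2 := \sum_(r <- DeltaM m) \sum_(s <- DeltaM n)
        b (V a1 r.1 * V a2 s.1) (V c1 r.2 * V c2 s.2).
    have L : forall p : H * H, \sum_(q <- DeltaM (m * n)) b (V p.1 q.1) (V p.2 q.2) =
        \sum_(u <- Delta p.1) \sum_(v <- Delta p.2) G u.1 u.2 v.1 v.2.
      move=> p; rewrite (DMmul m n (bilinV' bb p.1 p.2)) big_allpairs_dep /=.
      rewrite /G -swap22; apply: eq_bigr => r _; apply: eq_bigr => s' _.
      rewrite !V_mul (bilin_suml _ _ _ bb); apply: eq_bigr => u0 _.
      by rewrite (bilin_sumr _ _ _ bb).
    have R : forall w : H * H, SB b (DT (Mul (Var w.1 m) (Var w.2 n))) =
        \sum_(x <- Delta w.1) \sum_(y <- Delta w.2) G x.1 y.1 x.2 y.2.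
      move=> w; rewrite SB_Mul /= big_allpairs_dep; apply: eq_bigr => x _.
      under eq_bigr do rewrite big_allpairs_dep /=.
      by rewrite exchange_big.
    rewrite (eq_bigr _ (fun p _ => L p)) [RHS](eq_bigr _ (fun w _ => R w)).
    apply: (shuffle4 hco hcc); rewrite /G; split.
    * move=> a2 c1 c2 al x x'; rewrite scaler_sumr -big_split; apply: eq_bigr => r _.
      rewrite scaler_sumr -big_split; apply: eq_bigr => s' _ /=.
      by rewrite V_linH mulrDl -scalerAl (bilinDl bb) (bilinZl bb).
    * move=> a1 c1 c2 al x x'; rewrite scaler_sumr -big_split; apply: eq_bigr => r _.
      rewrite scaler_sumr -big_split; apply: eq_bigr => s' _ /=.
      by rewrite V_linH mulrDr -scalerAr (bilinDl bb) (bilinZl bb).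
    * move=> a1 a2 c2 al x x'; rewrite scaler_sumr -big_split; apply: eq_bigr => r _.
      rewrite scaler_sumr -big_split; apply: eq_bigr => s' _ /=.
      by rewrite V_linH mulrDl -scalerAl (bilinDr bb) (bilinZr bb).
    * move=> a1 a2 c1 al x x'; rewrite scaler_sumr -big_split; apply: eq_bigr => r _.
      rewrite scaler_sumr -big_split; apply: eq_bigr => s' _ /=.
      by rewrite V_linH mulrDr -scalerAr (bilinDr bb) (bilinZr bb).
  + rewrite -/(SB b _) SB_Var /= big_cons big_nil addr0.
    under eq_bigr => p _ do rewrite (DMone (bilinV' bb p.1 p.2)) big_cons big_nil addr0 /=.
    under eq_bigr do rewrite !V_1 (bilinZl bb) (bilinZr bb) scalerA.
    by rewrite -scaler_suml (counit_e hco) (bilinZl bb).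
Qed.


Definition DH (q : HM) : tens2 HM HM := DT (P2.repr q).

Lemma DH_cls t : teq2 (DH (cls t)) (DT t).
Proof. exact: (DT_eqv (repr_cls Delta eps t)). Qed.

Lemma DH_V h m : teq2 (DH (V h m)) (DT (Var h m)).
Proof. exact: DH_cls. Qed.

Definition epsT := evalT (A := k) id (fun h m => eps h * epsM m).

Lemma epsT_rel t u : P2.rel Delta eps t u -> epsT t = epsT u.
Proof.
case=> /= [a h h' m|a h m m'|h m n|h].
- by rewrite epsL' mulrDl mulrA.
- by rewrite epsML mulrDr mulrCA.
- rewrite /epsT evalT_tsum add0r big_map /= epsMM -(counit_e hco h) mulr_suml.
  apply: eq_bigr => p _; by rewrite mulrACA.
- by rewrite epsM1 mulr1.
Qed.

Lemma epsT_eqv t u : eqv Delta eps t u -> epsT t = epsT u.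
Proof. by apply: evalT_eqv => //; apply: epsT_rel. Qed.

Definition epsH (q : HM) : k := epsT (P2.repr q).

Lemma epsH_cls t : epsH (cls t) = epsT t.
Proof. exact: (epsT_eqv (repr_cls Delta eps t)). Qed.

Lemma epsH_lin : linform epsH.
Proof.
move=> a; elim/Qind => t; elim/Qind => u.
by rewrite clsZ clsD !epsH_cls.
Qed.

Lemma epsH_mul (x y : HM) : epsH (x * y) = epsH x * epsH y.
Proof. by elim/Qind: x => t; elim/Qind: y => u; rewrite clsM !epsH_cls. Qed.

Lemma epsH_1 : epsH 1 = 1.
Proof. by rewrite -cls1 epsH_cls. Qed.

Lemma epsH_V h m : epsH (V h m) = eps h * epsM m.
Proof. exact: epsH_cls. Qed.

Lemma epsH_Z1 a : epsH (a *: 1) = a.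
Proof. by rewrite (linformZ epsH_lin) epsH_1 mulr1. Qed.

Lemma DH_lin : Dlin DH.
Proof.
move=> a; elim/Qind => t; elim/Qind => u.
rewrite clsZ clsD; apply: teq2_trans (DH_cls _) _ => /=.
by apply: teq2_cat; [apply: teq2_scale|]; apply: teq2_sym; apply: DH_cls.
Qed.

Lemma DH_scale a (x : HM) : teq2 (DH (a *: x)) [seq (a *: p.1, p.2) | p <- DH x].
Proof.
elim/Qind: x => t; rewrite clsZ; apply: teq2_trans (DH_cls _) _ => /=.
by apply: teq2_scale; apply: teq2_sym; apply: DH_cls.
Qed.

Lemma DH_mul (x y : HM) : teq2 (DH (x * y)) (tprod (DH x) (DH y)).
Proof.
elim/Qind: x => t; elim/Qind: y => u; rewrite clsM.
apply: teq2_trans (DH_cls _) _ => /=.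
by apply: teq2_prod; apply: teq2_sym; apply: DH_cls.
Qed.

Lemma DH_1 : teq2 (DH 1) [:: (1, 1)].
Proof.
rewrite -cls1; apply: teq2_trans (DH_cls _) _ => /= W b bb.
by rewrite !big_cons !big_nil scale1r.
Qed.

Lemma sumDH_lin (W : lmodType k) (G : HM -> HM -> W) :
  bilin G -> linmap (fun c => \sum_(p <- DH c) G p.1 p.2).
Proof. by apply: sumD_lin'; apply: DH_lin. Qed.

Lemma bilin_epsH : bilin (fun x y : HM => epsH x *: y).
Proof.
split=> [v|u] a x y /=; first by rewrite epsH_lin scalerDl scalerA.
by rewrite scalerDr !scalerA mulrC.
Qed.

Lemma counitT t : \sum_(p <- DT t) epsH p.1 *: p.2 = cls t.
Proof.
elim: t => /= [h m|a|t IHt u IHu|a t IHt|t IHt u IHu].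
- rewrite big_allpairs_dep /=.
  under eq_bigr => p _ do under eq_bigr => q _ do rewrite epsH_V -scalerA.
  under eq_bigr => p _ do rewrite -scaler_sumr (counitL hMco (V_linM p.2)).
  exact: (counitL hco (V_linH m)).
- by rewrite big_cons big_nil /= addr0 epsH_Z1 clsC.
- by rewrite big_cat /= IHt IHu clsD.
- rewrite big_map /=; under eq_bigr do rewrite (linformZ epsH_lin) -scalerA.
  by rewrite -scaler_sumr IHt clsZ.
- rewrite /tprod big_allpairs_dep /=.
  under eq_bigr do under eq_bigr do rewrite epsH_mul -scalerA scalerAr scalerAl.
  under eq_bigr do rewrite -mulr_sumr.
  by rewrite -mulr_suml IHt IHu clsM.
Qed.

Lemma counitHL (c : HM) : \sum_(p <- DH c) epsH p.1 *: p.2 = c.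
Proof.
elim/Qind: c => t; rewrite -[RHS]counitT.
exact: (DH_cls t bilin_epsH).
Qed.


Lemma swap_use (l : tens2 HM HM) (W : lmodType k) (b : HM -> HM -> W) :
  teq2 [seq (p.2, p.1) | p <- l] l -> bilin b ->
  \sum_(p <- l) b p.2 p.1 = \sum_(p <- l) b p.1 p.2.
Proof. by move=> e bb; have := e W b bb; rewrite big_map. Qed.

Lemma DT_cocomm t : teq2 [seq (p.2, p.1) | p <- DT t] (DT t).
Proof.
elim: t => /= [h m|a|t IHt u IHu|a t IHt|t IHt u IHu] W b bb.
- rewrite big_map !big_allpairs_dep /=.
  have := cocommP hcc (@bilin_sum _ _ _ _ _ (DeltaM m)
     (fun q x y => b (V x q.2) (V y q.1)) (fun q => bilinV bb q.2 q.1)) h => /= ->.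
  apply: eq_bigr => p _.
  exact: (cocommP hMc (bilinV' bb p.1 p.2)).
- by rewrite !big_cons !big_nil /= (bilinZr bb) (bilinZl bb).
- by rewrite map_cat; apply: teq2_cat.
- rewrite -map_comp big_map big_map /=.
  under eq_bigr do rewrite (bilinZr bb); under [RHS]eq_bigr do rewrite (bilinZl bb).
  by rewrite -!scaler_sumr (swap_use IHt bb).
- rewrite /tprod big_map !big_allpairs_dep /= exchange_big /=.
  have bq : forall q : HM * HM, bilin (fun x y => b (x * q.2) (y * q.1)).
    by move=> q; apply: bilin_comp => //; apply: linmap_mulr.
  under eq_bigr => q _ do rewrite (swap_use IHt (bq q)).
  rewrite exchange_big; apply: eq_bigr => p _ /=.
  have bp : bilin (fun x y => b (p.1 * x) (p.2 * y)).
    by apply: bilin_comp => //; apply: linmap_mull.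
  exact: (swap_use IHu bp).
Qed.

Lemma DH_cocomm : cocommutative DH.
Proof.
elim/Qind => t; apply: teq2_trans (teq2_swap (DH_cls t)) _.
apply: teq2_trans (DT_cocomm t) _; apply: teq2_sym; exact: DH_cls.
Qed.

Lemma counitHR (c : HM) : \sum_(p <- DH c) epsH p.2 *: p.1 = c.
Proof.
rewrite -[RHS]counitHL.
exact: (@swap_use (DH c) _ (fun x y => epsH x *: y) (DH_cocomm c) bilin_epsH).
Qed.


Section CoA.
Variable W : lmodType k.

Lemma bilin_DHl (T : HM -> HM -> HM -> W) : trilin T ->
  bilin (fun x y => \sum_(q <- DH x) T q.1 q.2 y).
Proof.
case=> t1 [t2 t3]; split=> [v|u].
  by apply: (@sumDH_lin _ (fun a b => T a b v)); split => ? ? /=; [apply: t1|apply: t2].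
move=> a y y'; rewrite scaler_sumr -big_split; apply: eq_bigr => q _; exact: t3.
Qed.

Lemma bilin_DHr (T : HM -> HM -> HM -> W) : trilin T ->
  bilin (fun x y => \sum_(q <- DH y) T x q.1 q.2).
Proof.
case=> t1 [t2 t3]; split=> [v|u].
  move=> a y y'; rewrite scaler_sumr -big_split; apply: eq_bigr => q _; exact: t1.
by apply: (@sumDH_lin _ (fun a b => T u a b)); split => ? ? /=; [apply: t2|apply: t3].
Qed.

Lemma DH_use (x : HM) (l : tens2 HM HM) (b : HM -> HM -> W) :
  teq2 (DH x) l -> bilin b -> \sum_(q <- DH x) b q.1 q.2 = \sum_(q <- l) b q.1 q.2.
Proof. by move=> e bb; apply: e. Qed.

Lemma bilinT3 (T : HM -> HM -> HM -> W) z : trilin T -> bilin (fun x y => T x y z).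
Proof. by case=> t1 [t2 t3]; split=> ? ? /=; [apply: t1|apply: t2]. Qed.
Lemma bilinT1 (T : HM -> HM -> HM -> W) x : trilin T -> bilin (fun y z => T x y z).
Proof. by case=> t1 [t2 t3]; split=> ? ? /=; [apply: t2|apply: t3]. Qed.

End CoA.

Lemma DH_mul_sum (W : lmodType k) (b : HM -> HM -> W) (x y : HM) : bilin b ->
  \sum_(q <- DH (x * y)) b q.1 q.2 =
  \sum_(q <- DH x) \sum_(q' <- DH y) b (q.1 * q'.1) (q.2 * q'.2).
Proof. by move=> bb; rewrite (DH_use (DH_mul x y) bb) /tprod big_allpairs_dep. Qed.

Lemma coassocT t (W : lmodType k) (T : HM -> HM -> HM -> W) : trilin T ->
  \sum_(p <- DT t) \sum_(q <- DH p.1) T q.1 q.2 p.2 =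
  \sum_(p <- DT t) \sum_(q <- DH p.2) T p.1 q.1 q.2.
Proof.
elim: t W T => /= [h m|a|t IHt u IHu|a t IHt|t IHt u IHu] W T tT.
- rewrite !big_allpairs_dep /=.
  under eq_bigr => p _ do under eq_bigr => q _ do
    rewrite (DH_use (DH_V p.1 q.1) (bilinT3 _ tT)) big_allpairs_dep /=.
  under [RHS]eq_bigr => p _ do under eq_bigr => q _ do
    rewrite (DH_use (DH_V p.2 q.2) (bilinT1 _ tT)) big_allpairs_dep /=.
  under eq_bigr => p _ do rewrite exchange_big /=.
  have tF : forall (r : H * H) (p : H * H), trilin (fun y1 y2 y3 => T (V r.1 y1) (V r.2 y2) (V p.2 y3)).
    by move=> r p; apply: trilin_comp => //; apply: V_linM.
  under eq_bigr => p _ do under eq_bigr => r _ do rewrite (coassocP hMco (tF r p)) /=.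
  pose K a1 a2 a3 := \sum_(q <- DeltaM m) \sum_(s <- DeltaM q.2)
     T (V a1 q.1) (V a2 s.1) (V a3 s.2).
  have tK : trilin K.
    apply: trilin_sum => q; apply: trilin_sum => s.
    by apply: (trilin_comp (T := T)) => //; apply: V_linH.
  have := coassocP hco tK h; rewrite /K /= => ->.
  by apply: eq_bigr => p _; rewrite exchange_big.
- rewrite !big_cons !big_nil /= !addr0.
  rewrite (DH_use (DH_scale a 1) (bilinT3 _ tT)) big_map /=.
  case: (tT) => t1 _; under eq_bigr do rewrite (linmapZ (t1 _ _)).
  rewrite -scaler_sumr (DH_use DH_1 (bilinT3 _ tT)) (DH_use DH_1 (bilinT1 _ tT)).
  by rewrite !big_cons !big_nil /= !addr0 (linmapZ (t1 _ _)).
- by rewrite !big_cat /= IHt // IHu.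
- rewrite !big_map /=.
  under eq_bigr do rewrite (DH_use (DH_scale _ _) (bilinT3 _ tT)) big_map /=.
  case: tT => [t1 [t2 t3]].
  under eq_bigr do under eq_bigr do rewrite (linmapZ (t1 _ _)).
  under [RHS]eq_bigr do under eq_bigr do rewrite (linmapZ (t1 _ _)).
  under eq_bigr do rewrite -scaler_sumr; under [RHS]eq_bigr do rewrite -scaler_sumr.
  by rewrite -!scaler_sumr IHt.
- rewrite /tprod !big_allpairs_dep /=.
  under eq_bigr => p _ do under eq_bigr => p' _ do rewrite (DH_mul_sum _ _ (bilinT3 _ tT)).
  under [RHS]eq_bigr => p _ do under eq_bigr => p' _ do rewrite (DH_mul_sum _ _ (bilinT1 _ tT)).
  under eq_bigr => p _ do rewrite exchange_big /=.
  under [RHS]eq_bigr => p _ do rewrite exchange_big /=.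
  pose S a b c := \sum_(p' <- DT u) \sum_(q' <- DH p'.1) T (a * q'.1) (b * q'.2) (c * p'.2).
  have tS : trilin S.
    apply: trilin_sum => p'; apply: trilin_sum => q'.
    by apply: (trilin_comp (T := T)) => //; apply: linmap_mulr.
  have := IHt W S tS; rewrite /S => ->.
  apply: eq_bigr => p _; apply: eq_bigr => q _.
  have tT' : trilin (fun a b c => T (p.1 * a) (q.1 * b) (q.2 * c)).
    by apply: trilin_comp => //; apply: linmap_mull.
  exact: (IHu W _ tT').
Qed.

Lemma DH_coassoc (c : HM) : teq3
  (flatten [seq [seq (q.1, q.2, p.2) | q <- DH p.1] | p <- DH c])
  (flatten [seq [seq (p.1, q.1, q.2) | q <- DH p.2] | p <- DH c]).
Proof.
move=> W T tT; rewrite !big_flatten /= !big_map.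
under eq_bigr do rewrite big_map; under [RHS]eq_bigr do rewrite big_map.
elim/Qind: c => t /=.
rewrite (DH_use (DH_cls t) (bilin_DHl tT)) (DH_use (DH_cls t) (bilin_DHr tT)).
exact: coassocT.
Qed.


Lemma DH_bialg : is_bialgebra_on DH epsH.
Proof.
split; split.
- exact: epsH_lin.
- exact: DH_lin.
- exact: DH_coassoc.
- exact: counitHL.
- exact: counitHR.
- exact: DH_mul.
- exact: DH_1.
- exact: epsH_mul.
- exact: epsH_1.
Qed.

Section Anti.
Variable SM : M -> M.
Hypothesis hS : is_antipode DeltaM epsM SM.

Definition psiS (h : H) (m : M) : HM := V h (SM m).

Lemma psiS_HM : HM_map Delta eps psiS.
Proof.
have SL : linmap SM by case: hS.
split.
- split=> [v|u]; first exact: V_linH.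
  by apply: linmap_comp => //; apply: V_linM.
- by move=> h m n; rewrite /psiS (Smul hM hS) V_mul.
- by move=> h; rewrite /psiS (S1 hM hS) V_1.
Qed.

Definition SHM : HM -> HM := univ (hco := hco) (B := HM) psiS.

Lemma SHM_hom : alg_hom SHM.
Proof. exact: (univ_hom hco psiS_HM). Qed.

Lemma SHM_V h m : SHM (V h m) = V h (SM m).
Proof. exact: (univ_phi hco psiS_HM). Qed.

Lemma SHM_lin : linmap SHM. Proof. by case: SHM_hom. Qed.

Lemma antiT t : \sum_(p <- DT t) SHM p.1 * p.2 = epsT t *: 1.
Proof.
have [SL Sm S1'] := SHM_hom.
have [_ AL _] := hS.
elim: t => /= [h m|a|t IHt u IHu|a t IHt|t IHt u IHu].
- rewrite big_allpairs_dep /= exchange_big /=.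
  under eq_bigr => q _ do under eq_bigr => p _ do rewrite SHM_V.
  under eq_bigr => q _ do rewrite -V_mul.
  rewrite -(linmap_sum _ _ (V_linM h)) AL (linmapZ (V_linM h)) V_1 scalerA.
  by rewrite /epsT /= mulrC.
- by rewrite big_cons big_nil /= addr0 mulr1 (linmapZ SL) S1'.
- by rewrite big_cat /= IHt IHu scalerDl.
- rewrite big_map /=; under eq_bigr do rewrite (linmapZ SL) -scalerAl.
  by rewrite -scaler_sumr IHt scalerA.
- rewrite /tprod big_allpairs_dep /=.
  transitivity ((\sum_(p <- DT t) SHM p.1 * p.2) * (\sum_(q <- DT u) SHM q.1 * q.2)).
    rewrite mulr_suml; apply: eq_bigr => p _; rewrite mulr_sumr; apply: eq_bigr => q _.
    by rewrite Sm; ring.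
  by rewrite IHt IHu -scalerAl mul1r scalerA.
Qed.

Lemma SHM_antipode : is_antipode DH epsH SHM.
Proof.
have bb : bilin (fun x y : HM => SHM x * y) by apply: bilinM => //; apply: SHM_lin.
have AL : forall a, \sum_(p <- DH a) SHM p.1 * p.2 = epsH a *: 1.
  elim/Qind => t; rewrite (DH_use (DH_cls t) bb) antiT.
  by rewrite epsH_cls.
split.
- exact: SHM_lin.
- exact: AL.
- move=> a; rewrite -AL; under eq_bigr do rewrite mulrC.
  exact: (swap_use (DH_cocomm a) bb).
Qed.

End Anti.

End Bialg.

End P5.
Import P5.

Unset Implicit Arguments.
Set Strict Implicit.
Set Printing Implicit Defensive.

Theorem mainTheorem2 (k : comPzRingType) (M : comAlgType k) (H : lmodType k)
    (Delta : H -> tens2 H H) (eps : H -> k) :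
  is_coalgebra Delta eps -> cocommutative Delta ->
  exists (HM : comAlgType k) (phi : H -> M -> HM),
    [/\ HM_map Delta eps phi,
        (* universal property *)
        (forall (B : comAlgType k) (psi : H -> M -> B),
           HM_map Delta eps psi ->
           exists f : HM -> B,
             [/\ alg_hom f,
                 (forall h m, f (phi h m) = psi h m) &
                 (forall g : HM -> B, alg_hom g ->
                    (forall h m, g (phi h m) = psi h m) -> g =1 f)]),
        (* if H is a bialgebra, H acts on H(M) *)
        (forall (mul : H -> H -> H) (one : H),
           is_bialgebra mul one Delta eps ->
           exists act : H -> HM -> HM,
             module_algebra_action mul one Delta eps act /\
             (forall (h1 h2 : H) (m : M),
                act h1 (phi h2 m) = phi (mul h1 h2) m)) &
        (* if M is a cocommutative bialgebra (resp. Hopf algebra), so is H(M) *)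
        (forall (DeltaM : M -> tens2 M M) (epsM : M -> k),
           is_bialgebra_on DeltaM epsM -> cocommutative DeltaM ->
           exists (DeltaHM : HM -> tens2 HM HM) (epsHM : HM -> k),
             [/\ is_bialgebra_on DeltaHM epsHM, cocommutative DeltaHM &
                 (forall SM : M -> M, is_antipode DeltaM epsM SM ->
                    exists SHM : HM -> HM, is_antipode DeltaHM epsHM SHM)])].
Proof.
move=> hco hcc.
exists (HMc M hco), (phi hco).
split.
- exact: phi_HM.
- move=> B psi hpsi; exists (univ (hco := hco) psi); split.
  + exact: univ_hom.
  + exact: univ_phi.
  + by move=> g gh gphi; apply: univ_uniq.
- move=> mul one hbi; exists (act (hco := hco) mul).
  split; [exact: (act_module M hco hcc hbi)|exact: (act_phi hco hcc hbi)].
- move=> DeltaM epsM hM hMc; exists (DH (hco := hco) DeltaM), (epsH (hco := hco) epsM).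
  split.
  + exact: (DH_bialg hco hcc hM hMc).
  + exact: (DH_cocomm hcc hM hMc).
  + by move=> SM hS; exists (SHM (hco := hco) SM); exact: (SHM_antipode hco hcc hM hMc hS).
Qed.
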